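(* For any $\mathcal R$-dioid $K$ and $n\ge1$, $\mathrm{Mat}_{n\times n}(K)\simeq K\otimes_{\mathcal R}\mathrm{Mat}_{n\times n}(\mathbb B)$.
   Context: An $\mathcal R$-dioid is a dioid in which every regular subset of its multiplicative monoid has a supremum $\sum A$ with $\sum(AB)=(\sum A)(\sum B)$ (equivalently a $*$-continuous Kleene algebra); an $\mathcal R$-morphism is a dioid morphism preserving suprema of regular sets. $\mathrm{Mat}_{n\times n}(K)$ is the ($*$-continuous) Kleene algebra of $n\times n$ matrices over $K$ with matrix sum, product and standard matrix star; $\mathbb B=\{0,1\}$ is the boolean Kleene algebra. For $\mathcal R$-dioids $K_1,K_2$, $K_1\otimes_{\mathcal R}K_2$ is their tensor product: an $\mathcal R$-dioid with $\mathcal R$-morphisms from $K_1$ and $K_2$ whose images commute elementwise, universal in that every pair of elementwise commuting $\mathcal R$-morphisms from $K_1,K_2$ into an $\mathcal R$-dioid factors uniquely through an $\mathcal R$-morphism from the tensor product. *)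

(* Defs.v *)
From HB Require Import structures.
From mathcomp Require Import all_boot all_order all_algebra.
Set Implicit Arguments. Unset Strict Implicit. Unset Printing Implicit Defensive.
Import GRing.Theory.
Local Open Scope ring_scope.

(* The boolean dioid B = ({0,1}, or, and, 0, 1).  (MathComp's own ring *)
(* structure on bool uses xor, so we use a fresh alias.)               *)
Definition bdioid := bool.
HB.instance Definition _ := Choice.on bdioid.

Lemma bd_addrA : associative (orb : bdioid -> bdioid -> bdioid).
Proof. by move=> [] [] []. Qed.
Lemma bd_addrC : commutative (orb : bdioid -> bdioid -> bdioid).
Proof. by move=> [] []. Qed.
Lemma bd_add0r : left_id (false : bdioid) orb.
Proof. by move=> []. Qed.
Lemma bd_mulrA : associative (andb : bdioid -> bdioid -> bdioid).
Proof. by move=> [] [] []. Qed.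
Lemma bd_mul1r : left_id (true : bdioid) andb.
Proof. by move=> []. Qed.
Lemma bd_mulr1 : right_id (true : bdioid) andb.
Proof. by move=> []. Qed.
Lemma bd_mulrDl : left_distributive (andb : bdioid -> bdioid -> bdioid) orb.
Proof. by move=> [] [] []. Qed.
Lemma bd_mulrDr : right_distributive (andb : bdioid -> bdioid -> bdioid) orb.
Proof. by move=> [] [] []. Qed.
Lemma bd_mul0r : left_zero (false : bdioid) andb.
Proof. by move=> []. Qed.
Lemma bd_mulr0 : right_zero (false : bdioid) andb.
Proof. by move=> []. Qed.

HB.instance Definition _ := GRing.isPzSemiRing.Build bdioid
  bd_addrA bd_addrC bd_add0r bd_mulrA bd_mul1r bd_mulr1
  bd_mulrDl bd_mulrDr bd_mul0r bd_mulr0.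

Definition idempotent_add (R : pzSemiRingType) := forall x : R, x + x = x.

Definition dle (R : pzSemiRingType) (x y : R) : Prop := x + y = y.

(* Regular subsets of the multiplicative monoid (R, *, 1): the smallest *)
(* family containing the finite subsets and closed under union, product *)
(* AB = {ab} and star A* (the submonoid generated by A).  We present    *)
(* them via regular expressions and their denotations.                  *)
Inductive rexp (R : Type) : Type :=
| RZero : rexp R
| RAtom : R -> rexp R
| RPlus : rexp R -> rexp R -> rexp R
| RTimes : rexp R -> rexp R -> rexp R
| RStar : rexp R -> rexp R.

Definition setprod (R : pzSemiRingType) (A B : R -> Prop) : R -> Prop :=
  fun z => exists x y, A x /\ B y /\ z = x * y.

Inductive setstar (R : pzSemiRingType) (A : R -> Prop) : R -> Prop :=
| setstar_one : setstar A 1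
| setstar_cons : forall x y, A x -> setstar A y -> setstar A (x * y).

Fixpoint lang (R : pzSemiRingType) (e : rexp R) : R -> Prop :=
  match e with
  | RZero => fun _ => False
  | RAtom a => fun x => x = a
  | RPlus e1 e2 => fun x => lang e1 x \/ lang e2 x
  | RTimes e1 e2 => setprod (lang e1) (lang e2)
  | RStar e1 => setstar (lang e1)
  end.

Definition regular (R : pzSemiRingType) (A : R -> Prop) : Prop :=
  exists e : rexp R, forall x, A x <-> lang e x.

Definition is_sup (R : pzSemiRingType) (A : R -> Prop) (s : R) : Prop :=
  (forall x, A x -> dle x s) /\
  (forall u, (forall x, A x -> dle x u) -> dle s u).

Definition Rdioid (R : pzSemiRingType) : Prop :=
  idempotent_add R /\
  (forall A : R -> Prop, regular A -> exists s, is_sup A s) /\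
  (forall (A B : R -> Prop) (sA sB : R), regular A -> regular B ->
     is_sup A sA -> is_sup B sB -> is_sup (setprod A B) (sA * sB)).

Definition dioid_morph (R S : pzSemiRingType) (f : R -> S) : Prop :=
  f 0 = 0 /\ (forall x y, f (x + y) = f x + f y) /\
  f 1 = 1 /\ (forall x y, f (x * y) = f x * f y).

Definition image (R S : Type) (f : R -> S) (A : R -> Prop) : S -> Prop :=
  fun y => exists x, A x /\ y = f x.

Definition Rmorph (R S : pzSemiRingType) (f : R -> S) : Prop :=
  dioid_morph f /\
  (forall (A : R -> Prop) (s : R), regular A -> is_sup A s ->
     is_sup (image f A) (f s)).

Definition is_Rtensor (K1 K2 T : pzSemiRingType)
    (i1 : K1 -> T) (i2 : K2 -> T) : Prop :=
  Rdioid T /\ Rmorph i1 /\ Rmorph i2 /\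
  (forall a b, i1 a * i2 b = i2 b * i1 a) /\
  (forall (S : pzSemiRingType) (f1 : K1 -> S) (f2 : K2 -> S),
     Rdioid S -> Rmorph f1 -> Rmorph f2 ->
     (forall a b, f1 a * f2 b = f2 b * f1 a) ->
     exists h : T -> S,
       [/\ Rmorph h, (forall a, h (i1 a) = f1 a), (forall b, h (i2 b) = f2 b)
         & (forall h' : T -> S, Rmorph h' ->
              (forall a, h' (i1 a) = f1 a) -> (forall b, h' (i2 b) = f2 b) ->
              forall t, h' t = h t)]).

(* Main.v *)
Require Import Defs.
From HB Require Import structures.
From mathcomp Require Import all_boot all_order all_algebra.
From Stdlib Require Import Classical_Prop.
Set Implicit Arguments. Unset Strict Implicit. Unset Printing Implicit Defensive.
Import GRing.Theory.
Local Open Scope ring_scope.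

Section Generic.
Variable R : pzSemiRingType.
Hypothesis idem : idempotent_add R.

Lemma dle_refl (x : R) : dle x x. Proof. exact: idem. Qed.
Lemma dle_trans (x y z : R) : dle x y -> dle y z -> dle x z.
Proof. rewrite /dle => h1 h2; by rewrite -h2 addrA h1. Qed.
Lemma dle_addE (x y u : R) : dle (x + y) u <-> dle x u /\ dle y u.
Proof.
rewrite /dle; split.
  move=> h; split.
    by rewrite -h !addrA idem.
  by rewrite -h [x + y]addrC !addrA idem.
by move=> [h1 h2]; rewrite -addrA h2 h1.
Qed.
Lemma dle0 (u : R) : dle 0 u. Proof. by rewrite /dle add0r. Qed.
Lemma dle_mulm (a b x y : R) : dle x y -> dle (a * x * b) (a * y * b).
Proof. by rewrite /dle => h; rewrite -mulrDl -mulrDr h. Qed.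
Lemma dle_antisym (x y : R) : dle x y -> dle y x -> x = y.
Proof. by rewrite /dle => h1 h2; rewrite -h2 addrC h1. Qed.
Lemma dle_addl (x y : R) : dle x (x + y).
Proof. by rewrite /dle addrA idem. Qed.
Lemma dle_addr (x y : R) : dle y (x + y).
Proof. by rewrite /dle addrC -addrA idem. Qed.
Lemma dle_mul2 (x x' y y' : R) : dle x x' -> dle y y' -> dle (x * y) (x' * y').
Proof.
move=> h1 h2; apply: (@dle_trans _ (x' * y)).
  by have := dle_mulm 1 y h1; rewrite !mul1r.
by have := dle_mulm x' 1 h2; rewrite !mulr1.
Qed.

Lemma dle_sum (I : finType) (F : I -> R) u :
  dle (\sum_i F i) u <-> forall i, dle (F i) u.
Proof.
split.
  move=> h i; move: h; rewrite (bigD1 i) //= => /dle_addE []; done.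
move=> h; elim/big_ind: _ => //; first exact: dle0.
by move=> x y hx hy; apply/dle_addE.
Qed.

Definition ub (X : R -> Prop) a b u := forall x, X x -> dle (a * x * b) u.
Definition cs (X : R -> Prop) (s : R) :=
  forall a b u, dle (a * s * b) u <-> ub X a b u.

Lemma cs_ub (X Y : R -> Prop) s :
  (forall a b u, ub X a b u <-> ub Y a b u) -> cs X s -> cs Y s.
Proof. move=> h c a b u; rewrite c; exact: h. Qed.
Lemma cs_ext (X Y : R -> Prop) s :
  (forall x, X x <-> Y x) -> cs X s -> cs Y s.
Proof.
move=> h; apply: cs_ub => a b u; split=> H x /h; exact: H.
Qed.

Lemma cs_extR (X Y : R -> Prop) s :
  cs X s -> (forall x, X x <-> Y x) -> cs Y s.
Proof. move=> c h; exact: cs_ext h c. Qed.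

Lemma cs_is_sup X s : cs X s -> is_sup X s.
Proof.
move=> c; split.
  move=> x Xx; have hs : dle (1 * s * 1) s by rewrite mul1r mulr1; exact: dle_refl.
  have := proj1 (c 1 1 s) hs x Xx.
  by rewrite !mul1r !mulr1.
move=> u h; have := proj2 (c 1 1 u); rewrite mul1r mulr1; apply.
by move=> x Xx; rewrite mul1r mulr1; apply: h.
Qed.

Lemma is_sup_unique (X : R -> Prop) s t : is_sup X s -> is_sup X t -> s = t.
Proof.
move=> [u1 l1] [u2 l2]; apply: dle_antisym; [apply: l1 | apply: l2]; done.
Qed.

Lemma cs_one c : cs (fun x => x = c) c.
Proof. move=> a b u; split; first by move=> h x ->. by apply. Qed.
Lemma cs_zero : cs (fun _ => False) 0.
Proof. move=> a b u; split; first by move=> _ x. by move=> _; rewrite mulr0 mul0r; exact: dle0. Qed.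
Lemma cs_union X Y s t : cs X s -> cs Y t -> cs (fun x => X x \/ Y x) (s + t).
Proof.
move=> cX cY a b u; rewrite mulrDr mulrDl dle_addE cX cY; split.
  by move=> [h1 h2] x [] ?; [apply: h1|apply: h2].
by move=> h; split=> x ?; apply: h; [left|right].
Qed.
Lemma cs_prod X Y s t : cs X s -> cs Y t -> cs (setprod X Y) (s * t).
Proof.
move=> cX cY a b u; rewrite mulrA -(mulrA (a * s)) cX; split.
  move=> h z [x [y [Xx [Yy ->]]]].
  have hx : dle (a * x * t * b) u by have := h x Xx; rewrite -!mulrA.
  by have := proj1 (cY (a * x) b u) hx y Yy; rewrite !mulrA.
move=> h x Xx; rewrite !mulrA; apply/cY; move=> y Yy.
by have := h (x * y); rewrite !mulrA; apply; exists x, y.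
Qed.

Fixpoint pw (W : R -> Prop) (m : nat) : R -> Prop :=
  match m with 0 => fun x => x = 1 | m'.+1 => setprod W (pw W m') end.

Lemma setstar_pw W x : setstar W x <-> exists m, pw W m x.
Proof.
split.
  elim=> [|y z Wy _ [m hm]]; first by exists 0%N.
  by exists m.+1, y, z.
move=> [m]; elim: m x => [|m IH] x /=; first by move=> ->; constructor.
move=> [y [z [Wy [hz ->]]]]; constructor => //; exact: IH.
Qed.

Lemma cs_pw W w m : cs W w -> cs (pw W m) (w ^+ m).
Proof.
move=> c; elim: m => [|m IH] /=; first by rewrite expr0; exact: cs_one.
rewrite exprS; exact: cs_prod.
Qed.

Lemma ub_setstar W a b u : ub (setstar W) a b u <-> forall m, ub (pw W m) a b u.
Proof.
split.
  by move=> h m x hx; apply: h; apply/setstar_pw; exists m.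
by move=> h x /setstar_pw [m hm]; apply: (h m).
Qed.

Lemma cs_star W w t : cs W w -> cs (setstar (fun x => x = w)) t -> cs (setstar W) t.
Proof.
move=> cW cS; apply: cs_ub cS => a b u.
rewrite !ub_setstar; split=> h m.
  apply/(cs_pw m cW); apply/(cs_pw m (cs_one w)); exact: h.
apply/(cs_pw m (cs_one w)); apply/(cs_pw m cW); exact: h.
Qed.

Lemma setstar0 x : setstar (fun z : R => z = 0) x -> x = 1 \/ x = 0.
Proof. case=> [|y z -> _]; [by left | by right; rewrite mul0r]. Qed.

Lemma cs_star0 : cs (setstar (fun z : R => z = 0)) 1.
Proof.
move=> a b u; split.
  move=> h x /setstar0 [] ->; first done.
  rewrite mulr0 mul0r; exact: dle0.
by move=> h; apply: h; constructor.
Qed.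

Lemma setstar_in (A : R -> Prop) x : A x -> setstar A x.
Proof. by move=> Ax; rewrite -[x]mulr1; constructor => //; constructor. Qed.
Lemma setstar_mul (A : R -> Prop) x y : setstar A x -> setstar A y -> setstar A (x * y).
Proof.
elim=> [|u v Au _ IH] Hy; first by rewrite mul1r.
rewrite -mulrA; constructor => //; exact: IH.
Qed.
Lemma setstar_sub (A B : R -> Prop) x :
  (forall y, A y -> setstar B y) -> setstar A x -> setstar B x.
Proof.
move=> h; elim=> [|u v Au _ IH]; first constructor.
apply: setstar_mul => //; exact: h.
Qed.
Lemma setstar_ext (A B : R -> Prop) x :
  (forall y, A y <-> B y) -> setstar A x <-> setstar B x.
Proof.
by move=> h; split; apply: setstar_sub => y /h; apply: setstar_in.
Qed.

Lemma star_split (A B : R -> Prop) z :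
  setstar (fun x => A x \/ B x) z <->
  setprod (setstar A) (setstar (setprod B (setstar A))) z.
Proof.
split.
  elim=> [|x z' ABx _ [p [q [hp [hq ->]]]]].
    exists 1, 1; rewrite mulr1; split; first exact: setstar_one.
    by split; [exact: setstar_one|].
  case: ABx => [Ax|Bx].
    exists (x * p), q; rewrite mulrA; split => //; constructor => //.
  exists 1, (x * p * q); rewrite mul1r mulrA; split; first constructor.
  split => //; constructor => //; exists x, p; done.
move=> [p [q [hp [hq ->]]]]; apply: setstar_mul.
  by apply: setstar_sub hp => y Ay; apply: setstar_in; left.
apply: setstar_sub hq => y [b [p' [Bb [hp' ->]]]].
apply: setstar_mul; first by apply: setstar_in; right.
by apply: setstar_sub hp' => y' Ay'; apply: setstar_in; left.
Qed.

Lemma star_dom (x y v : R) :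
  setstar (fun z => z = x \/ z = y) v ->
  exists w, setstar (fun z => z = x + y) w /\ dle v w.
Proof.
elim=> [|c v' hc _ [w [hw lw]]].
  by exists 1; split; [constructor | exact: dle_refl].
exists ((x + y) * w); split; first by constructor.
apply: dle_mul2 => //; case: hc => ->; [exact: dle_addl | exact: dle_addr].
Qed.

Lemma star_sum_ub (x y a b u : R) :
  ub (setstar (fun z => z = x + y)) a b u <->
  ub (setstar (fun z => z = x \/ z = y)) a b u.
Proof.
split.
  move=> h v /star_dom [w [hw lw]].
  apply: dle_trans (h w hw); exact: dle_mulm.
move=> h.
suff H : forall w, setstar (fun z => z = x + y) w -> forall c,
   (forall v, setstar (fun z => z = x \/ z = y) v -> dle (a * (c * v) * b) u) ->
   dle (a * (c * w) * b) u.
  move=> w hw; have := H w hw 1; rewrite mul1r; apply => v hv; rewrite mul1r.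
  exact: h.
move=> w; elim=> [|c' w' -> _ IH] c hc; first by apply: hc; exact: setstar_one.
rewrite (mulrA c) mulrDr mulrDl mulrDr mulrDl; apply/dle_addE; split.
  apply: IH => v hv; rewrite -(mulrA c).
  by apply: hc; constructor => //; left.
apply: IH => v hv; rewrite -(mulrA c).
by apply: hc; constructor => //; right.
Qed.

Lemma reg_cs (Rd : Rdioid R) (X : R -> Prop) s : regular X -> is_sup X s -> cs X s.
Proof.
move: Rd => [_ [_ Hprod]] rX sX a b u.
have ra : forall c : R, regular (fun x => x = c).
  by move=> c; exists (RAtom c).
have sa : forall c : R, is_sup (fun x => x = c) c.
  by move=> c; split; [move=> x ->; exact: dle_refl | move=> v; apply].
have rP : forall A B : R -> Prop, regular A -> regular B -> regular (setprod A B).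
  move=> A B [e1 h1] [e2 h2]; exists (RTimes e1 e2) => x /=; split.
    by move=> [y [z [Ay [Bz ->]]]]; exists y, z; rewrite -h1 -h2.
  by move=> [y [z [Ay [Bz ->]]]]; exists y, z; rewrite h1 h2.
have := Hprod _ _ _ _ (rP _ _ (ra a) rX) (ra b) (Hprod _ _ _ _ (ra a) rX (sa a) sX) (sa b).
move=> [U L]; split.
  move=> h x Xx; apply: dle_trans h; apply: U.
  by exists (a * x), b; split; [exists a, x | ].
move=> h; apply: L => y [ax [b' [[a' [x [-> [Xx ->]]] [-> ->]]]]].
exact: h.
Qed.

End Generic.
Section Morph.
Variables (R S : pzSemiRingType) (phi : R -> S).
Hypothesis hphi : dioid_morph phi.

Lemma image_one c x : Defs.image phi (fun z => z = c) x <-> x = phi c.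
Proof. by split; [move=> [y [-> ->]] | move=> ->; exists c]. Qed.
Lemma image_zero x : Defs.image phi (fun _ => False) x <-> False.
Proof. by split => // [[y []]]. Qed.
Lemma image_union (A B : R -> Prop) x :
  Defs.image phi (fun z => A z \/ B z) x <-> (Defs.image phi A x \/ Defs.image phi B x).
Proof.
split; first by move=> [y [[Ay|By] ->]]; [left|right]; exists y.
by move=> [[y [Ay ->]]|[y [By ->]]]; exists y; split => //; [left|right].
Qed.
Lemma image_setprod (A B : R -> Prop) x :
  Defs.image phi (setprod A B) x <-> setprod (Defs.image phi A) (Defs.image phi B) x.
Proof.
case: hphi => [_ [_ [_ hm]]]; split.
  move=> [y [[p [q [Ap [Bq ->]]]] ->]]; exists (phi p), (phi q).
  by split; [exists p | split; [exists q|rewrite hm]].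
move=> [p' [q' [[p [Ap ->]] [[q [Bq ->]] ->]]]].
by exists (p * q); split; [exists p, q | rewrite hm].
Qed.
Lemma image_setstar (A : R -> Prop) x :
  Defs.image phi (setstar A) x <-> setstar (Defs.image phi A) x.
Proof.
case: hphi => [_ [_ [h1 hm]]]; split.
  move=> [y [hy ->]]; elim: hy => [|p q Ap _ IH]; first by rewrite h1; exact: setstar_one.
  by rewrite hm; constructor => //; exists p.
elim=> [|p q [p' [Ap' ->]] _ [q' [hq' ->]]].
  by exists 1; split; [exact: setstar_one | rewrite h1].
by exists (p' * q'); split; [constructor | rewrite hm].
Qed.

Fixpoint rmap (e : rexp R) : rexp S :=
  match e with
  | RZero => RZero _
  | RAtom a => RAtom (phi a)
  | RPlus e1 e2 => RPlus (rmap e1) (rmap e2)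
  | RTimes e1 e2 => RTimes (rmap e1) (rmap e2)
  | RStar e1 => RStar (rmap e1)
  end.

Lemma lang_rmap e x : lang (rmap e) x <-> Defs.image phi (lang e) x.
Proof.
elim: e x => [|a|e1 IH1 e2 IH2|e1 IH1 e2 IH2|e1 IH1] x /=.
- by rewrite image_zero.
- by rewrite image_one.
- by rewrite image_union IH1 IH2.
- rewrite image_setprod; split.
    by move=> [p [q [hp [hq ->]]]]; exists p, q; rewrite -IH1 -IH2.
  by move=> [p [q [hp [hq ->]]]]; exists p, q; rewrite IH1 IH2.
- rewrite image_setstar; exact: setstar_ext.
Qed.

Lemma image_ext (A B : R -> Prop) x : (forall y, A y <-> B y) ->
  Defs.image phi A x <-> Defs.image phi B x.
Proof. by move=> h; split=> [[y [/h ? ->]]|[y [/h ? ->]]]; exists y. Qed.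

Lemma image_regular (A : R -> Prop) : regular A -> regular (Defs.image phi A).
Proof.
move=> [e he]; exists (rmap e) => x; rewrite lang_rmap; exact: image_ext.
Qed.

Lemma dioid_morph_dle x y : dle x y -> dle (phi x) (phi y).
Proof. case: hphi => [_ [ha _]]; rewrite /dle => h; by rewrite -ha h. Qed.
End Morph.
Section Mat.
Variables (K : pzSemiRingType) (n : nat).
Hypothesis HK : Rdioid K.
Local Notation MK := 'M[K]_n.

Lemma idemK : idempotent_add K. Proof. by case: HK. Qed.

Definition i1 (c : K) : MK := \matrix_(i, j) (if i == j then c else 0).

Lemma mulE (A B : MK) i j : (A * B) i j = \sum_k A i k * B k j.
Proof. by rewrite -mulmxE !mxE. Qed.

Lemma sum_delta (G : 'I_n -> K) j : \sum_k (if k == j then G k else 0) = G j.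
Proof. by rewrite (bigD1 j) //= eqxx big1 ?addr0 // => k /negPf ->. Qed.
Lemma sum_delta' (G : 'I_n -> K) j : \sum_k (if j == k then G k else 0) = G j.
Proof. by rewrite (bigD1 j) //= eqxx big1 ?addr0 // => k; rewrite eq_sym => /negPf ->. Qed.

Lemma mul_i1r (A : MK) c i j : (A * i1 c) i j = A i j * c.
Proof.
rewrite mulE -(sum_delta (fun k => A i k * c)); apply: eq_bigr => k _.
by rewrite mxE; case: (k == j); rewrite ?mulr0.
Qed.
Lemma mul_i1l (A : MK) c i j : (i1 c * A) i j = c * A i j.
Proof.
rewrite mulE -(sum_delta' (fun k => c * A k j)); apply: eq_bigr => k _.
by rewrite mxE; case: (i == k); rewrite ?mul0r.
Qed.

Lemma dleM (A B : MK) : dle A B <-> forall i j, dle (A i j) (B i j).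
Proof.
rewrite /dle; split.
  by move=> h i j; rewrite -{2}h mxE.
by move=> h; apply/matrixP => i j; rewrite mxE h.
Qed.

Lemma idemM : idempotent_add MK.
Proof. move=> A; apply/matrixP => i j; rewrite mxE; exact: idemK. Qed.

Lemma i1_cs (X : K -> Prop) s : cs X s -> cs (Defs.image i1 X) (i1 s).
Proof.
move=> c A B V.
have E : forall x i j, (A * i1 x * B) i j = \sum_k A i k * x * B k j.
  by move=> x i j; rewrite mulE; apply: eq_bigr => k _; rewrite mul_i1r.
rewrite dleM; split.
  move=> h y [x [Xx ->]]; apply/dleM => i j; rewrite E; apply/(dle_sum idemK) => k.
  have := h i j; rewrite E => /(dle_sum idemK) /(_ k) /c; apply; done.
move=> h i j; rewrite E; apply/(dle_sum idemK) => k; apply/c => x Xx.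
have := h (i1 x) (ex_intro _ x (conj Xx erefl)).
by move/dleM/(_ i j); rewrite E => /(dle_sum idemK) /(_ k).
Qed.

Definition good (S : pzSemiRingType) (phi : MK -> S) :=
  idempotent_add S /\ dioid_morph phi /\
  (forall (X : K -> Prop) s, regular X -> is_sup X s ->
     cs (Defs.image (fun c => phi (i1 c)) X) (phi (i1 s))).


Definition Xr (k : 'I_n) (M : MK) : MK := \matrix_(i, j) (if i == k then M i j else 0).
Definition Yr (k : 'I_n) (M : MK) : MK := \matrix_(i, j) (if i == k then 0 else M i j).

Lemma XYr k M : M = Xr k M + Yr k M.
Proof.
by apply/matrixP => i j; rewrite !mxE; case: (i == k); rewrite ?addr0 ?add0r.
Qed.

Lemma Xr_step k M y : Xr k M * (i1 y * Xr k M) = i1 (M k k * y) * Xr k M.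
Proof.
apply/matrixP => i j; rewrite mul_i1l mulE.
under eq_bigr => l _ do rewrite mul_i1l.
rewrite /Xr !mxE; case: (eqVneq i k) => [->|nik].
  rewrite (eq_bigr (fun l => if l == k then M k l * (y * M l j) else 0)).
    by rewrite sum_delta mulrA.
  by move=> l _; rewrite !mxE eqxx; case: (l == k); rewrite ?mulr0.
rewrite ?(negPf nik) mulr0 big1 // => l _; by rewrite !mxE (negPf nik) mul0r.
Qed.

Lemma i1_1 : i1 1 = 1 :> MK.
Proof. apply/matrixP => i j; rewrite !mxE; by case: (i == j). Qed.

Lemma star_Xr k M z :
  setstar (fun w => w = Xr k M) z <->
  z = 1 \/ setprod (Defs.image i1 (setstar (fun x => x = M k k))) (fun w => w = Xr k M) z.
Proof.
split.
  elim=> [|x z' -> _ [->|[p [q [[y [hy ->]] [-> ->]]]]]]; first by left.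
    right; exists (i1 1), (Xr k M); rewrite mulr1; split.
      by exists 1; split; [exact: setstar_one|].
    by split => //; rewrite i1_1 mul1r.
  right; exists (i1 (M k k * y)), (Xr k M); split; last by rewrite Xr_step.
  by exists (M k k * y); split => //; constructor.
move=> [->|[p [q [[y [hy ->]] [-> ->]]]]]; first exact: setstar_one.
elim: hy => [|c y' -> _ IH]; first by rewrite i1_1 mul1r; apply: setstar_in.
by rewrite -Xr_step; constructor.
Qed.

Lemma image_comp (S T : pzSemiRingType) (f : K -> S) (g : S -> T) (X : K -> Prop) x :
  Defs.image (fun c => g (f c)) X x <-> Defs.image g (Defs.image f X) x.
Proof.
split; first by move=> [y [Xy ->]]; exists (f y); split => //; exists y.
by move=> [_ [[y [Xy ->]] ->]]; exists y.
Qed.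

Lemma row_star (r : seq 'I_n) (M : MK) :
  (forall i j, i \notin r -> M i j = 0) ->
  exists U : MK, forall (S : pzSemiRingType) (phi : MK -> S), good phi ->
    cs (Defs.image phi (setstar (fun z => z = M))) (phi U).
Proof.
elim: r M => [|k r IH] M hM.
  have -> : M = 0 by apply/matrixP => i j; rewrite mxE hM.
  exists 1 => S phi [idS [mphi _]].
  have [z0 [_ [o1 _]]] := mphi.
  apply: cs_ext (_ : forall x, setstar (fun w => w = 0) x <-> _) _.
    move=> x; rewrite image_setstar //; apply: setstar_ext => y.
    by rewrite image_one // z0.
  by rewrite o1; exact: cs_star0.
set X := Xr k M; set Y := Yr k M.
have [s ss] : exists s, is_sup (setstar (fun x => x = M k k)) s.
  by case: HK => [_ [Hs _]]; apply: Hs; exists (RStar (RAtom (M k k))).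
set TX := 1 + i1 s * X.
set Z := Y * TX.
have hZ : forall i j, i \notin r -> Z i j = 0.
  move=> i j ir; rewrite /Z mulE big1 // => l _; rewrite !mxE.
  case: (eqVneq i k) => [_|nik]; first by rewrite mul0r.
  by rewrite hM ?mul0r // in_cons negb_or nik.
have [UZ hUZ] := IH Z hZ.
exists (TX * UZ) => S phi gphi.
have [idS [mphi gc]] := gphi.
have [z0 [ad [o1 ml]]] := mphi.
have csX : cs (setstar (fun w => w = phi X)) (phi TX).
  apply: cs_ext (_ : forall x, Defs.image phi (setstar (fun w => w = X)) x <-> _) _.
    move=> x; rewrite image_setstar //; apply: setstar_ext => y; exact: image_one.
  apply: cs_ext (_ : forall x, (x = 1 \/ setprod (Defs.image (fun c => phi (i1 c))
        (setstar (fun x => x = M k k))) (fun w => w = phi X) x) <-> _) _.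
    move=> x; rewrite (image_ext phi x (star_Xr k M)) image_union //.
    rewrite image_one // o1 image_setprod //.
    split=> -[->|h]; [by left|right|by left|right]; move: h.
      move=> [p [q [hp [hq ->]]]]; exists p, q; split; first by apply/image_comp.
      by rewrite hq image_one.
    move=> [p [q [hp [hq ->]]]]; exists p, q; split; first by apply/image_comp.
    by move: hq; rewrite image_one.
  rewrite /TX ad o1 ml; apply: (cs_union idS); first exact: cs_one.
  apply: cs_prod; last exact: cs_one.
  apply: gc => //; exists (RStar (RAtom (M k k))) => x; done.
have csW : cs (setprod (fun w => w = phi Y) (setstar (fun w => w = phi X))) (phi Z).
  by rewrite /Z ml; apply: cs_prod => //; exact: cs_one.
have csZ : cs (setstar (fun w => w = phi Z)) (phi UZ).
  apply: cs_ext (hUZ S phi gphi) => x; rewrite image_setstar //.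
  apply: setstar_ext => y; exact: image_one.
apply: cs_ext (_ : forall x, setstar (fun w => w = phi X + phi Y) x <-> _) _.
  move=> x; rewrite image_setstar //; apply: setstar_ext => y.
  by rewrite image_one // {1}(XYr k M) ad.
apply: cs_ub (fun a b u => iff_sym (star_sum_ub idS (phi X) (phi Y) a b u)) _.
apply: cs_ext (fun x => iff_sym (star_split (fun w => w = phi X) (fun w => w = phi Y) x)) _.
rewrite ml; apply: cs_prod => //; exact: cs_star csW csZ.
Qed.


Lemma mat_reg (e : rexp MK) :
  exists U : MK, forall (S : pzSemiRingType) (phi : MK -> S), good phi ->
    cs (Defs.image phi (lang e)) (phi U).
Proof.
elim: e => [|a|e1 [U1 h1] e2 [U2 h2]|e1 [U1 h1] e2 [U2 h2]|e1 [U1 h1]].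
- exists 0 => S phi [idS [[z0 _] _]]; rewrite z0.
  apply: (cs_extR (@cs_zero S)) => x; rewrite image_zero; done.
- exists a => S phi _; apply: (cs_extR (cs_one (phi a))) => x /=.
  by rewrite image_one.
- exists (U1 + U2) => S phi gp; have [idS [[z0 [ad _]] _]] := gp; rewrite ad.
  apply: (cs_extR (cs_union idS (h1 S phi gp) (h2 S phi gp))) => x /=.
  by rewrite image_union.
- exists (U1 * U2) => S phi gp; have [idS [mp _]] := gp.
  have [_ [_ [_ ml]]] := mp; rewrite ml.
  apply: (cs_extR (cs_prod (h1 S phi gp) (h2 S phi gp))) => x /=.
  by rewrite image_setprod.
- have hU1 : forall i j, i \notin enum 'I_n -> U1 i j = 0 by move=> i j; rewrite mem_enum.
  have [U hU] := @row_star (enum 'I_n) U1 hU1.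
  exists U => S phi gp; have [idS [mp _]] := gp.
  apply: cs_ext (_ : forall x, setstar (Defs.image phi (lang e1)) x <-> _) _.
    by move=> x /=; rewrite image_setstar.
  apply: cs_star (h1 S phi gp) _.
  apply: (cs_extR (hU S phi gp)) => x; rewrite image_setstar //.
  apply: setstar_ext => y; exact: image_one.
Qed.

Lemma mat_cs (A : MK -> Prop) : regular A ->
  exists U : MK, forall (S : pzSemiRingType) (phi : MK -> S), good phi ->
    cs (Defs.image phi A) (phi U).
Proof.
move=> [e he]; have [U hU] := mat_reg e; exists U => S phi gp.
apply: (cs_extR (hU S phi gp)) => x; apply: image_ext => y; by rewrite he.
Qed.

Lemma good_id : good (fun A : MK => A).
Proof.
split; first exact: idemM.
split; first by split; [|split; [|split]].
move=> X s rX sX; apply: i1_cs; exact: (reg_cs idemK HK rX sX).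
Qed.

Lemma mat_cs_id (A : MK -> Prop) : regular A -> exists U, cs A U /\
   forall (S : pzSemiRingType) (phi : MK -> S), good phi -> cs (Defs.image phi A) (phi U).
Proof.
move=> rA; have [U hU] := mat_cs rA; exists U; split => //.
apply: (cs_extR (hU _ _ good_id)) => x; split; [by move=> [y [Ay ->]] | by exists x].
Qed.

Lemma Rdioid_M : Rdioid MK.
Proof.
split; first exact: idemM.
split.
  by move=> A rA; have [U [hU _]] := mat_cs_id rA; exists U; exact: (cs_is_sup idemM hU).
move=> A B sA sB rA rB hA hB.
have [UA [cA _]] := mat_cs_id rA; have [UB [cB _]] := mat_cs_id rB.
rewrite (is_sup_unique hA (cs_is_sup idemM cA)) (is_sup_unique hB (cs_is_sup idemM cB)).
exact: (cs_is_sup idemM (cs_prod cA cB)).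
Qed.

End Mat.

Arguments i1 {K n}.

Section Main.
Variables (K : pzSemiRingType) (n : nat).
Hypothesis HK : Rdioid K.
Local Notation MK := 'M[K]_n.
Local Notation MB := 'M[bdioid]_n.

Definition bk (b : bdioid) : K := if b then 1 else 0.
Definition i2 (B : MB) : MK := \matrix_(i, j) bk (B i j).

Lemma bk0 : bk 0 = 0. Proof. by []. Qed.
Lemma bkD x y : bk (x + y) = bk x + bk y.
Proof. by case: x; case: y; rewrite /bk /= ?addr0 ?add0r ?(idemK HK). Qed.
Lemma bkM x y : bk (x * y) = bk x * bk y.
Proof. by case: x; case: y; rewrite /bk /= ?mulr0 ?mul0r ?mulr1. Qed.
Lemma bk_sum (F : 'I_n -> bdioid) : bk (\sum_i F i) = \sum_i bk (F i).
Proof. exact: (big_morph bk bkD bk0). Qed.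

Lemma i1_morph : dioid_morph (@i1 K n).
Proof.
split; first by apply/matrixP => i j; rewrite !mxE; case: (i == j).
split; first by move=> x y; apply/matrixP => i j; rewrite !mxE; case: (i == j); rewrite ?addr0.
split; first exact: i1_1.
move=> x y; apply/matrixP => i j; rewrite mul_i1r !mxE.
by case: (i == j); rewrite ?mul0r.
Qed.

Lemma i2_morph : dioid_morph i2.
Proof.
split; first by apply/matrixP => i j; rewrite !mxE.
split; first by move=> x y; apply/matrixP => i j; rewrite !mxE bkD.
split; first by apply/matrixP => i j; rewrite !mxE; case: (i == j).
move=> x y; apply/matrixP => i j; rewrite [LHS]mxE !mulE bk_sum.
by apply: eq_bigr => k _; rewrite bkM !mxE.
Qed.

Lemma Rmorph_i1 : Rmorph (@i1 K n).
Proof.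
split; first exact: i1_morph.
move=> A s _ [ubA lA]; split.
  move=> y [x [Ax ->]]; apply: dioid_morph_dle; [exact: i1_morph| exact: ubA].
move=> u hu; apply/dleM => i j; rewrite mxE.
case: (eqVneq i j) => [<-|_]; last exact: dle0.
apply: lA => x Ax; have := hu (i1 x) (ex_intro _ x (conj Ax erefl)).
by move/dleM/(_ i i); rewrite mxE eqxx.
Qed.

Lemma Rmorph_i2 : Rmorph i2.
Proof.
split; first exact: i2_morph.
move=> A s _ [ubA lA]; split.
  move=> y [x [Ax ->]]; apply: dioid_morph_dle; [exact: i2_morph| exact: ubA].
move=> u hu; apply/dleM => i j; rewrite mxE.
case sij: (s i j); last exact: dle0.
case: (classic (exists a, A a /\ a i j = true)) => [[a [Aa aij]]|na].
  have := hu (i2 a) (ex_intro _ a (conj Aa erefl)).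
  by move/dleM/(_ i j); rewrite mxE aij.
pose s' : MB := \matrix_(k, l) (if (k == i) && (l == j) then false else s k l).
have : dle s s'.
  apply: lA => a Aa; apply/dleM => k l; rewrite mxE.
  case: (eqVneq k i) => [->|_] /=; last exact: (dleM _ _).1 (ubA a Aa) k l.
  case: (eqVneq l j) => [->|_] /=; last exact: (dleM _ _).1 (ubA a Aa) i l.
  case aij: (a i j); last by [].
  by exfalso; apply: na; exists a.
by move/dleM/(_ i j); rewrite mxE !eqxx sij.
Qed.

Lemma comm12 a b : i1 a * i2 b = i2 b * i1 a.
Proof.
apply/matrixP => i j; rewrite mul_i1l mul_i1r mxE /bk.
by case: (b i j); rewrite ?mulr1 ?mul1r ?mulr0 ?mul0r.
Qed.

End Main.

Arguments i2 {K n}.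
Arguments bk {K}.

Section Univ.
Variables (K : pzSemiRingType) (n : nat).
Hypothesis HK : Rdioid K.
Local Notation MK := 'M[K]_n.
Local Notation MB := 'M[bdioid]_n.
Variables (S : pzSemiRingType) (f1 : K -> S) (f2 : MB -> S).
Hypotheses (RS : Rdioid S) (Rf1 : Rmorph f1) (Rf2 : Rmorph f2).
Hypothesis comm : forall a b, f1 a * f2 b = f2 b * f1 a.

Lemma bmul (x y : bdioid) : x * y = x && y. Proof. by []. Qed.
Lemma b0 : (0 : bdioid) = false. Proof. by []. Qed.
Lemma natr_b (b : bool) : (b%:R : bdioid) = b. Proof. by case: b. Qed.

Definition Eb (i j : 'I_n) : MB := \matrix_(k, l) ((k == i) && (l == j) : bdioid).

Lemma EbM i j k l : Eb i j * Eb k l = if j == k then Eb i l else 0.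
Proof.
apply/matrixP => p q; rewrite mulE.
under eq_bigr => m _ do rewrite !mxE bmul.
rewrite (eq_bigr (fun m => if m == j then ((p == i) && (j == k) && (q == l) : bdioid) else 0)).
  rewrite sum_delta; case: (j == k); rewrite !mxE ?andbT ?andbF //.
move=> m _; case: (eqVneq m j) => [->|nmj]; first by rewrite ?eqxx ?andbT ?andbA.
by rewrite ?(negPf nmj) andbF.
Qed.

Lemma sumEb : \sum_i Eb i i = 1 :> MB.
Proof.
apply/matrixP => p q; rewrite summxE [RHS]mxE natr_b.
under eq_bigr => i _ do rewrite mxE.
rewrite (eq_bigr (fun i => if i == p then ((q == p) : bdioid) else 0)).
  by rewrite sum_delta eq_sym.
move=> i _; case: (eqVneq i p) => [->|nip]; first by rewrite ?eqxx.
by rewrite ?(negPf nip) ?andbF.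
Qed.

Lemma Bdecomp (B : MB) : B = \sum_i \sum_j (if B i j then Eb i j else 0).
Proof.
apply/matrixP => p q; rewrite summxE.
rewrite (eq_bigr (fun i => if i == p then B i q else 0)); first by rewrite sum_delta.
move=> i _; rewrite summxE.
rewrite (eq_bigr (fun j => if j == q then (if i == p then B i q else 0) else 0)).
  by rewrite sum_delta.
move=> j _; case Bij: (B i j); rewrite !mxE;
  case: (eqVneq j q) => [ejq|/negPf nq]; case: (eqVneq i p) => [eip|/negPf np];
  rewrite ?nq ?np ?andbF ?andbT //= -?ejq -?eip ?Bij ?eqxx //.
Qed.

Lemma Kdecomp (t : MK) : t = \sum_i \sum_j i1 (t i j) * i2 (Eb i j).
Proof.
apply/matrixP => p q; rewrite summxE.
rewrite (eq_bigr (fun i => if i == p then t i q else 0)); first by rewrite sum_delta.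
move=> i _; rewrite summxE.
rewrite (eq_bigr (fun j => if j == q then (if i == p then t i q else 0) else 0)).
  by rewrite sum_delta.
move=> j _; rewrite mul_i1l !mxE /bk.
case: (eqVneq j q) => [->|/negPf nq]; case: (eqVneq i p) => [->|/negPf np];
  rewrite ?nq ?np ?eqxx ?andbF ?andbT /= ?mulr1 ?mulr0 //.
Qed.

Definition g i j := f2 (Eb i j).
Definition h (A : MK) : S := \sum_i \sum_j f1 (A i j) * g i j.

Lemma f1_0 : f1 0 = 0. Proof. by case: Rf1 => [[]]. Qed.
Lemma f1_D x y : f1 (x + y) = f1 x + f1 y. Proof. by case: Rf1 => [[_ []]]. Qed.
Lemma f1_1 : f1 1 = 1. Proof. by case: Rf1 => [[_ [_ []]]]. Qed.
Lemma f1_M x y : f1 (x * y) = f1 x * f1 y. Proof. by case: Rf1 => [[_ [_ [_]]]]. Qed.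
Lemma f2_0 : f2 0 = 0. Proof. by case: Rf2 => [[]]. Qed.
Lemma f2_D x y : f2 (x + y) = f2 x + f2 y. Proof. by case: Rf2 => [[_ []]]. Qed.
Lemma f2_1 : f2 1 = 1. Proof. by case: Rf2 => [[_ [_ []]]]. Qed.
Lemma f2_M x y : f2 (x * y) = f2 x * f2 y. Proof. by case: Rf2 => [[_ [_ [_]]]]. Qed.
Lemma f1_sum (F : 'I_n -> K) : f1 (\sum_i F i) = \sum_i f1 (F i).
Proof. exact: (big_morph f1 f1_D f1_0). Qed.
Lemma f2_sum (F : 'I_n -> MB) : f2 (\sum_i F i) = \sum_i f2 (F i).
Proof. exact: (big_morph f2 f2_D f2_0). Qed.

Lemma gM i j k l : g i j * g k l = if j == k then g i l else 0.
Proof. by rewrite /g -f2_M EbM; case: (j == k); rewrite ?f2_0. Qed.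

Lemma h_i1 a : h (i1 a) = f1 a.
Proof.
rewrite /h (eq_bigr (fun i => f1 a * g i i)).
  by rewrite -mulr_sumr /g -f2_sum sumEb f2_1 mulr1.
move=> i _; rewrite (eq_bigr (fun j => if i == j then f1 a * g i j else 0)).
  by rewrite sum_delta'.
by move=> j _; rewrite mxE; case: (i == j); rewrite ?f1_0 ?mul0r.
Qed.

Lemma h_i2 B : h (i2 B) = f2 B.
Proof.
rewrite {2}(Bdecomp B) f2_sum; apply: eq_bigr => i _; rewrite f2_sum.
apply: eq_bigr => j _; rewrite mxE /bk.
by case: (B i j); rewrite ?f1_1 ?mul1r ?f1_0 ?mul0r ?f2_0.
Qed.

Lemma swap4 (x y z w : S) : y * z = z * y -> x * y * (z * w) = x * z * (y * w).
Proof. by move=> H; rewrite !mulrA -(mulrA x y z) H mulrA. Qed.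

Lemma h_morph : dioid_morph h.
Proof.
split.
  rewrite /h big1 // => i _; rewrite big1 // => j _; by rewrite mxE f1_0 mul0r.
split.
  move=> A B; rewrite /h -big_split; apply: eq_bigr => i _.
  rewrite -big_split; apply: eq_bigr => j _; by rewrite mxE f1_D mulrDl.
split; first by rewrite -i1_1 h_i1 f1_1.
move=> A B.
transitivity (\sum_i \sum_j \sum_l f1 (A i j) * f1 (B j l) * g i l).
  rewrite /h; apply: eq_bigr => i _.
  rewrite exchange_big; apply: eq_bigr => l _.
  by rewrite mulE f1_sum mulr_suml; apply: eq_bigr => j _; rewrite f1_M.
rewrite /h mulr_suml; apply: eq_bigr => i _.
rewrite mulr_suml; apply: eq_bigr => j _.
symmetry; rewrite mulr_sumr.
rewrite [LHS](eq_bigr (fun k => if j == k then \sum_l f1 (A i j) * f1 (B k l) * g i l else 0)).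
  by rewrite sum_delta'.
move=> k _; rewrite mulr_sumr.
case: (eqVneq j k) => [<-|/negPf njk].
  apply: eq_bigr => l _; rewrite swap4; last by rewrite /g comm.
  by rewrite gM eqxx.
rewrite big1 // => l _; rewrite swap4; last by rewrite /g comm.
by rewrite gM njk mulr0.
Qed.

Lemma good_h : good h.
Proof.
case: RS => idS _.
split => //; split; first exact: h_morph.
move=> X s rX sX.
apply: (cs_extR (X := Defs.image f1 X)).
  apply: (reg_cs idS RS); first exact: (image_regular (proj1 Rf1) rX).
  by rewrite h_i1; apply: (proj2 Rf1).
by move=> x; split=> -[y [Xy ->]]; exists y; rewrite h_i1.
Qed.

Lemma Rmorph_h : Rmorph h.
Proof.
split; first exact: h_morph.
move=> A s rA sA.
have [U [cA hU]] := mat_cs_id HK rA.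
rewrite (is_sup_unique sA (cs_is_sup (idemM HK) cA)).
exact: (cs_is_sup (proj1 RS) (hU S h good_h)).
Qed.

Lemma h_unique (h' : MK -> S) : Rmorph h' ->
  (forall a, h' (i1 a) = f1 a) -> (forall b, h' (i2 b) = f2 b) ->
  forall t, h' t = h t.
Proof.
move=> [[z0 [ad [_ ml]]] _] e1 e2 t.
have hs : forall F : 'I_n -> MK, h' (\sum_i F i) = \sum_i h' (F i).
  by move=> F; exact: (big_morph h' ad z0).
rewrite {1}(Kdecomp t) hs; apply: eq_bigr => i _; rewrite hs.
by apply: eq_bigr => j _; rewrite ml e1 e2.
Qed.

End Univ.

Theorem proposition4 (K : pzSemiRingType) (n : nat) :
  Rdioid K -> (0 < n)%N ->
  exists (i1 : K -> 'M[K]_n) (i2 : 'M[bdioid]_n -> 'M[K]_n),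
    is_Rtensor i1 i2.
Proof.
move=> HK _; exists (@i1 K n), (@i2 K n).
split; first exact: Rdioid_M.
split; first exact: Rmorph_i1.
split; first exact: Rmorph_i2.
split; first exact: comm12.
move=> S f1 f2 RS Rf1 Rf2 cm.
exists (h f1 f2); split.
- exact: Rmorph_h.
- exact: h_i1.
- exact: h_i2.
- move=> h' Rh' e1 e2 t; exact: h_unique.
Qed.
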